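(* If $x_1$ and $x_2$ are 4-cycles in the symmetric group $S_5$, then $(x_1x_2)^{15}=1$ or $(x_1x_2^2)^{15}=1$ or $(x_1x_2^3)^{15}=1$. *)

(* Defs.v *)
From mathcomp Require Import all_boot all_fingroup.
Set Implicit Arguments. Unset Strict Implicit. Unset Printing Implicit Defensive.

Definition is_4cycle (n : nat) (s : 'S_n) : Prop :=
  exists x : 'I_n, #|porbit s x| = 4 /\ forall y, y \notin porbit s x -> s y = y.

(* Main.v *)
Require Import Defs.
From mathcomp Require Import all_boot all_fingroup.
Local Open Scope group_scope.

Fixpoint tup n : seq (seq nat) := if n is n'.+1 then flatten [seq [seq a :: t | t <- tup n'] | a <- iota 0 5] else [:: [::]].
Definition good (t : seq nat) := has (fun z => nth 0 t z != z) (iota 0 5) && all (fun z => (nth 0 t z == z) || ((iter 4 (nth 0 t) z == z) && (iter 2 (nth 0 t) z != z))) (iota 0 5).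
Definition cc (t1 t2 : seq nat) k := all (fun i => iter 15 (fun j => iter k (nth 0 t2) (nth 0 t1 j)) i == i) (iota 0 5).
Definition concl t1 t2 := [|| cc t1 t2 1, cc t1 t2 2 | cc t1 t2 3].
Definition check := let G := [seq t <- tup 5 | good t] in all (fun t1 => all (fun t2 => concl t1 t2) G) G.
Lemma checkT : check. Proof. vm_compute. reflexivity. Qed.

Lemma tupP n t : size t = n -> all (fun a => a < 5)%N t -> t \in tup n.
Proof.
elim: n t => [|n IH] [|a t] //.
move=> [st] /andP[ha ht].
change (a :: t \in flatten [seq [seq b :: t0 | t0 <- tup n] | b <- iota 0 5]).
apply/flatten_mapP; exists a; first by rewrite mem_iota.
by apply/mapP; exists t => //; apply: IH.
Qed.

Definition enc (s : 'S_5) : seq nat := [seq val (s (inord n)) | n <- iota 0 5].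

Lemma encE (s : 'S_5) (i : 'I_5) : nth 0 (enc s) i = val (s i).
Proof.
rewrite /enc (nth_map 0) ?size_iota ?ltn_ord // nth_iota ?ltn_ord // add0n.
by rewrite inord_val.
Qed.

Lemma enc_tup s : enc s \in tup 5.
Proof.
apply: tupP; first by rewrite size_map size_iota.
by apply/allP => v /mapP [n _ ->]; apply: ltn_ord.
Qed.

Lemma iter_val (g : 'I_5 -> 'I_5) (G : nat -> nat) m (i : 'I_5) :
  (forall j : 'I_5, val (g j) = G (val j)) -> val (iter m g i) = iter m G (val i).
Proof. by move=> H; elim: m => //= m IH; rewrite H; congr G. Qed.

Lemma good_enc s : is_4cycle s -> good (enc s).
Proof.
move=> [x [Hc Hf]].
have Ho z : z \in porbit s x -> (s ^+ 4) z = z /\ (s ^+ 2) z != z.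
  move=> hz; have E : porbit s z = porbit s x by apply/eqP; rewrite eq_porbit_mem.
  have := iter_porbit s z; have := uniq_traject_porbit s z; rewrite E Hc => U I.
  rewrite !permX; split => //.
  move: U => /=; rewrite !inE; case/and4P => /norP [_ /norP [h _]] _ _ _.
  by rewrite eq_sym.
apply/andP; split.
  apply/hasP; exists (val x); first by rewrite mem_iota ltn_ord.
  rewrite encE; apply/negP => /eqP /val_inj E.
  have [_ ] := Ho x (porbit_id s x).
  by rewrite expgS permM E expg1 E eqxx.
apply/allP => n; rewrite mem_iota add0n => /andP [_ hn].
have -> : n = val (Ordinal hn) by [].
have IE k : iter k (nth 0 (enc s)) (Ordinal hn) = val (iter k s (Ordinal hn)).
  by rewrite (iter_val _ (nth 0 (enc s))) // => j; rewrite encE.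
rewrite !IE encE -!permX.
case: (boolP (Ordinal hn \in porbit s x)) => h.
  by have [-> ->] := Ho _ h; rewrite eqxx orbT.
by rewrite (Hf _ h) eqxx.
Qed.

Theorem lemma3 (x1 x2 : 'S_5) :
  is_4cycle x1 -> is_4cycle x2 ->
  (x1 * x2) ^+ 15 = 1 \/ (x1 * x2 ^+ 2) ^+ 15 = 1 \/ (x1 * x2 ^+ 3) ^+ 15 = 1.
Proof.
move=> h1 h2.
have := checkT; rewrite /check => /allP /(_ (enc x1)).
rewrite mem_filter good_enc ?enc_tup // => /(_ isT) /allP /(_ (enc x2)).
rewrite mem_filter good_enc ?enc_tup // => /(_ isT).
have K k : cc (enc x1) (enc x2) k -> (x1 * x2 ^+ k) ^+ 15 = 1.
  move=> /allP H; apply/permP => i; rewrite perm1; apply: val_inj.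
  have := H (val i); rewrite mem_iota ltn_ord => /(_ isT) /eqP <-.
  rewrite permX; apply: iter_val => j.
  rewrite permM permX encE; apply: iter_val => l; by rewrite encE.
rewrite /concl => /or3P [] /K; tauto.
Qed.
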